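(* Let $r\ge0$ be an integer, $X=\mathbb{P}_{\mathbb{P}^1}(\mathcal{O}\oplus\mathcal{O}(r))$ the Hirzebruch surface, and let $Y$ be either $Y_0=\mathbb{P}_X(\mathcal{O}\oplus\mathcal{O}(sD'_0+tD'_3))$ with integers $s,t\ge0$, or $Y_1=\mathbb{P}_X(\mathcal{O}(sD'_0)\oplus\mathcal{O}(tD'_3))$ with integers $s,t>0$. Let $L$ be a nef line bundle on $Y$. Then $c_3(J_1(L))=0$ if and only if either $L=D_0$, or $r=0$ and $L=D_3$, or $s=t=0$ and $L=D_5$, or $(r,Y,L)$ is one of the following: (a) $r$ arbitrary, $Y=\mathbb{P}_X(\mathcal{O}\oplus\mathcal{O}(sD'_0+D'_3))$ with $s\ge0$, $L=D_0+D_5$; (b) $r$ arbitrary, $Y=\mathbb{P}_X(\mathcal{O}(D'_0)\oplus\mathcal{O}(D'_3))$, $L=D_0+D_5$; (c) $r=0$ (so $X=\mathbb{P}^1\times\mathbb{P}^1$), $Y=\mathbb{P}_X(\mathcal{O}\oplus\mathcal{O}(D'_0+tD'_3))$ with $t\ge0$, $L=D_3+D_5$; (d) $r=0$, $Y=\mathbb{P}_X(\mathcal{O}\oplus\mathcal{O}(2D'_0+2D'_3))$, $L=D_5$; (e) $r=1$, $Y=X\times\mathbb{P}^1$, $L=D_3+D_5$; (f) $r=1$, $Y=\mathbb{P}_X(\mathcal{O}\oplus\mathcal{O}(D'_0+2D'_3))$, $L=D_5$; (g) $r=1$, $Y=\mathbb{P}_X(\mathcal{O}\oplus\mathcal{O}(3D'_3))$,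 $L=D_5$; (h) $r=2$, $Y=\mathbb{P}_X(\mathcal{O}\oplus\mathcal{O}(2D'_3))$, $L=D_5$.
   Context: $X$ is the smooth projective toric surface with fan rays $\rho'_0=(1,0)$, $\rho'_1=(-1,r)$, $\rho'_2=(0,1)$, $\rho'_3=(0,-1)$, and $D'_i$ is the torus-invariant divisor of $\rho'_i$. The toric threefold $Y$ has rays $\rho_0=(1,0,s)$ if $Y=Y_0$ (resp. $\rho_0=(1,0,-s)$ if $Y=Y_1$), $\rho_1=(-1,r,0)$, $\rho_2=(0,1,0)$, $\rho_3=(0,-1,t)$, $\rho_4=(0,0,1)$, $\rho_5=(0,0,-1)$, and $D_i$ is the torus-invariant divisor of $\rho_i$. $X\times\mathbb{P}^1$ is the case $Y_0$ with $s=t=0$. $J_1(L)$ is the first jet bundle of $L$, fitting in $0\to\Omega_Y\otimes L\to J_1(L)\to L\to0$, and $c_3(J_1(L))$ is identified with its degree. *)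

(* Defs.v *)
From mathcomp Require Import all_boot all_order all_algebra.
Set Implicit Arguments. Unset Strict Implicit. Unset Printing Implicit Defensive.
Import Order.TTheory GRing.Theory Num.Theory.
Local Open Scope ring_scope.

Inductive kind := Y0 | Y1.

(* coordinate m (in 0..2) of the ray rho_i (i in 0..5) of the fan of Y *)
Definition rayc (k : kind) (r s t : nat) (i : 'I_6) (m : 'I_3) : int :=
  let v : int * int * int :=
    match val i with
    | 0%N => (1, 0, if k is Y0 then s%:Z else - s%:Z)
    | 1%N => (-1, r%:Z, 0)
    | 2%N => (0, 1, 0)
    | 3%N => (0, -1, t%:Z)
    | 4%N => (0, 0, 1)
    | _ => (0, 0, -1)
    end in
  match val m with 0%N => v.1.1 | 1%N => v.1.2 | _ => v.2 end.

(* maximal cones of the fan of X (pairs of indices of rho'_i) *)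
Definition maxConesX : seq (nat * nat) := [:: (0, 2); (2, 1); (1, 3); (3, 0)]%N.

Definition maxConeY (C : {set 'I_6}) : bool :=
  has (fun p : nat * nat =>
         (C == [set (inord p.1 : 'I_6); inord p.2; inord 4]) ||
         (C == [set (inord p.1 : 'I_6); inord p.2; inord 5])) maxConesX.

Definition coneY (S : {set 'I_6}) : bool :=
  [exists C : {set 'I_6}, maxConeY C && (S \subset C)].

(* T i j l = deg (D_i . D_j . D_l): the degree map on cubic monomials of the
   Chow ring  Z[x_0..x_5] / (Stanley-Reisner ideal + linear relations),
   normalized so that the class of a point (a maximal cone) has degree 1. *)
Definition IsIntersectionForm (k : kind) (r s t : nat)
    (T : 'I_6 -> 'I_6 -> 'I_6 -> int) : Prop :=
  [/\ (forall i j l, T i j l = T j i l /\ T i j l = T i l j),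
      (forall i j l, ~~ coneY [set i; j; l] -> T i j l = 0),
      (forall (m : 'I_3) j l, \sum_(i < 6) rayc k r s t i m * T i j l = 0)
    & (forall i j l, maxConeY [set i; j; l] -> T i j l = 1)].

(* torus invariant divisors  sum_i a_i D_i  *)
Definition divisor := 'I_6 -> int.
Definition D (n : nat) : divisor := fun i => (val i == n)%:R.
Definition addD (a b : divisor) : divisor := fun i => a i + b i.
Definition subD (a b : divisor) : divisor := fun i => a i - b i.

(* linear equivalence: a - b is the divisor of the character chi^m *)
Definition linEq (k : kind) (r s t : nat) (a b : divisor) : Prop :=
  exists m : 'I_3 -> int,
    forall i, a i - b i = \sum_(n < 3) m n * rayc k r s t i n.

Definition inter (T : 'I_6 -> 'I_6 -> 'I_6 -> int) (a b c : divisor) : int :=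
  \sum_(i < 6) \sum_(j < 6) \sum_(l < 6) a i * b j * c l * T i j l.

(* nef: nonnegative degree on every torus-invariant curve V(rho_i, rho_j) *)
Definition nef (T : 'I_6 -> 'I_6 -> 'I_6 -> int) (a : divisor) : Prop :=
  forall i j : 'I_6, i != j -> coneY [set i; j] ->
    0 <= inter T (D i) (D j) a.

(* From 0 -> Omega_Y (x) L -> J_1(L) -> L -> 0 and the
   generalized Euler sequence 0 -> Omega_Y -> (+)_i O(-D_i) -> O^3 -> 0,
   c(J_1(L)) = prod_{i=0}^5 (1 + L - D_i) * (1 + L)^(-2); its degree-3 part is
   e_3(u) - 2 L e_2(u) + 3 L^2 e_1(u) - 4 L^3,  u_i = L - D_i. *)
Definition c3J1 (T : 'I_6 -> 'I_6 -> 'I_6 -> int) (L : divisor) : int :=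
  let u (i : 'I_6) := subD L (D i) in
  (\sum_(i < 6) \sum_(j < 6 | (i < j)%N) \sum_(l < 6 | (j < l)%N)
      inter T (u i) (u j) (u l))
  - 2 * (\sum_(i < 6) \sum_(j < 6 | (i < j)%N) inter T L (u i) (u j))
  + 3 * (\sum_(i < 6) inter T L L (u i))
  - 4 * inter T L L L.

(* Main.v *)
Require Import Defs.
From mathcomp Require Import all_boot all_order all_algebra.
From mathcomp Require Import zify ring lra.
From Stdlib Require PropExtensionality.
Set Implicit Arguments. Unset Strict Implicit. Unset Printing Implicit Defensive.
Import Order.TTheory GRing.Theory Num.Theory.
Local Open Scope ring_scope.

Definition i0 : 'I_6 := @Ordinal 6 0 isT.
Definition i1 : 'I_6 := @Ordinal 6 1 isT.
Definition i2 : 'I_6 := @Ordinal 6 2 isT.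
Definition i3 : 'I_6 := @Ordinal 6 3 isT.
Definition i4 : 'I_6 := @Ordinal 6 4 isT.
Definition i5 : 'I_6 := @Ordinal 6 5 isT.

Lemma inordE0 : (inord 0 : 'I_6) = i0. Proof. by apply: val_inj; rewrite /= inordK. Qed.
Lemma inordE1 : (inord 1 : 'I_6) = i1. Proof. by apply: val_inj; rewrite /= inordK. Qed.
Lemma inordE2 : (inord 2 : 'I_6) = i2. Proof. by apply: val_inj; rewrite /= inordK. Qed.
Lemma inordE3 : (inord 3 : 'I_6) = i3. Proof. by apply: val_inj; rewrite /= inordK. Qed.
Lemma inordE4 : (inord 4 : 'I_6) = i4. Proof. by apply: val_inj; rewrite /= inordK. Qed.
Lemma inordE5 : (inord 5 : 'I_6) = i5. Proof. by apply: val_inj; rewrite /= inordK. Qed.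

Lemma maxConeY_cases C : maxConeY C ->
  C = [set i0; i2; i4] \/ C = [set i0; i2; i5] \/ C = [set i2; i1; i4] \/ C = [set i2; i1; i5] \/
      C = [set i1; i3; i4] \/ C = [set i1; i3; i5] \/ C = [set i3; i0; i4] \/ C = [set i3; i0; i5].
Proof.
rewrite /maxConeY /maxConesX /= !inordE0 !inordE1 !inordE2 !inordE3 !inordE4 !inordE5 orbF.
by case/orP=> [/orP[]|/orP[/orP[]|/orP[/orP[]|/orP[]]]] /eqP ->; tauto.
Qed.

Lemma maxC024 : maxConeY [set i0; i2; i4].
Proof. by rewrite /maxConeY /maxConesX /= !inordE0 !inordE2 !inordE4 eqxx. Qed.
Lemma maxC214 : maxConeY [set i2; i1; i4].
Proof. by rewrite /maxConeY /maxConesX /= !inordE1 !inordE2 !inordE4 eqxx !orbT. Qed.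
Lemma maxC304 : maxConeY [set i3; i0; i4].
Proof. by rewrite /maxConeY /maxConesX /= !inordE0 !inordE3 !inordE4 eqxx !orbT. Qed.

Lemma nocone (x y : 'I_6) (S : {set 'I_6}) : x \in S -> y \in S ->
  (forall C, maxConeY C -> (x \notin C) || (y \notin C)) -> ~~ coneY S.
Proof.
move=> hx hy H; apply/existsP => -[C /andP [HC Hs]].
by move: (H C HC) => /orP [] /negP; apply; move/subsetP: Hs; apply.
Qed.

Lemma pair01 C : maxConeY C -> (i0 \notin C) || (i1 \notin C).
Proof. by case/maxConeY_cases => [|[|[|[|[|[|[|]]]]]]] ->; rewrite !inE. Qed.
Lemma pair23 C : maxConeY C -> (i2 \notin C) || (i3 \notin C).
Proof. by case/maxConeY_cases => [|[|[|[|[|[|[|]]]]]]] ->; rewrite !inE. Qed.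
Lemma pair45 C : maxConeY C -> (i4 \notin C) || (i5 \notin C).
Proof. by case/maxConeY_cases => [|[|[|[|[|[|[|]]]]]]] ->; rewrite !inE. Qed.

Lemma coneW (S C : {set 'I_6}) : maxConeY C -> S \subset C -> coneY S.
Proof. by move=> h1 h2; apply/existsP; exists C; rewrite h1. Qed.

Lemma maxC025 : maxConeY [set i0; i2; i5].
Proof. by rewrite /maxConeY /maxConesX /= !inordE0 !inordE2 !inordE5 eqxx !orbT. Qed.

Lemma cone24 : coneY [set i2; i4].
Proof. by apply: (coneW maxC024); apply/subsetP => x; rewrite !inE => /orP[]/eqP->. Qed.
Lemma cone04 : coneY [set i0; i4].
Proof. by apply: (coneW maxC024); apply/subsetP => x; rewrite !inE => /orP[]/eqP->. Qed.
Lemma cone02 : coneY [set i0; i2].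
Proof. by apply: (coneW maxC024); apply/subsetP => x; rewrite !inE => /orP[]/eqP->. Qed.
Lemma cone25 : coneY [set i2; i5].
Proof. by apply: (coneW maxC025); apply/subsetP => x; rewrite !inE => /orP[]/eqP->. Qed.

Definition P0 (r s t a b c : int) : int := (-8) + (8)*c + (8)*b + (-12)*b*c + (8)*a + (-12)*a*c + (-12)*a*b + (24)*a*b*c + (4)*t*c + (-6)*t*c*c + (-6)*t*a*c + (12)*t*a*c*c + (4)*s*c + (-6)*s*c*c + (-6)*s*b*c + (12)*s*b*c*c + (-6)*s*t*c*c + (8)*s*t*c*c*c + (4)*r*b + (-6)*r*b*c + (-6)*r*b*b + (12)*r*b*b*c + (2)*r*t*c + (-3)*r*t*c*c + (-6)*r*t*b*c + (12)*r*t*b*c*c + (-3)*r*t*t*c*c + (4)*r*t*t*c*c*c.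
Definition P1 (r s t a b c : int) : int := (-8) + (8)*c + (8)*b + (-12)*b*c + (8)*a + (-12)*a*c + (-12)*a*b + (24)*a*b*c + (4)*t*c + (-6)*t*c*c + (-6)*t*a*c + (12)*t*a*c*c + (4)*s*c + (-6)*s*c*c + (-6)*s*b*c + (12)*s*b*c*c + (4)*s*t*c*c*c + (4)*r*b + (-6)*r*b*c + (-6)*r*b*b + (12)*r*b*b*c + (2)*r*t*c + (-3)*r*t*c*c + (-6)*r*t*b*c + (12)*r*t*b*c*c + (-3)*r*t*t*c*c + (4)*r*t*t*c*c*c.
Definition P1s (r s t a b c : int) : int := P1 r (s+1) (t+1) a b c.

Lemma int_split (x : int) : 0 <= x -> x = 0 \/ exists2 y, 0 <= y & x = y + 1.
Proof. move=> hx; case: (ltrP 0 x) => h; last by left; lia. right; exists (x - 1); lia. Qed.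

Lemma posC (c x : int) : 0 < c -> 0 <= x -> c + x = 0 -> False.
Proof. lia. Qed.
Lemma negC (c x : int) : 0 < c -> 0 <= x -> - (c + x) = 0 -> False.
Proof. lia. Qed.
Ltac POS := repeat apply: addr_ge0; repeat apply: mulr_ge0; done.

Definition Disj0 (r s t a b c : int) : Prop :=
  (a = 1 /\ b = 0 /\ c = 0) \/ (r = 0 /\ a = 0 /\ b = 1 /\ c = 0) \/
  (s = 0 /\ t = 0 /\ a = 0 /\ b = 0 /\ c = 1) \/ (t = 1 /\ a = 1 /\ b = 0 /\ c = 1) \/
  (r = 0 /\ s = 1 /\ a = 0 /\ b = 1 /\ c = 1) \/
  (r = 0 /\ s = 2 /\ t = 2 /\ a = 0 /\ b = 0 /\ c = 1) \/
  (r = 1 /\ s = 0 /\ t = 0 /\ a = 0 /\ b = 1 /\ c = 1) \/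
  (r = 1 /\ s = 1 /\ t = 2 /\ a = 0 /\ b = 0 /\ c = 1) \/
  (r = 1 /\ s = 0 /\ t = 3 /\ a = 0 /\ b = 0 /\ c = 1) \/
  (r = 2 /\ s = 0 /\ t = 2 /\ a = 0 /\ b = 0 /\ c = 1).

Definition Disj1 (r s t a b c : int) : Prop :=
  (a = 1 /\ b = 0 /\ c = 0) \/ (r = 0 /\ a = 0 /\ b = 1 /\ c = 0) \/
  (s = 0 /\ t = 0 /\ a = 0 /\ b = 0 /\ c = 1).

Lemma core0 (r s t a b c : int) : 0 <= r -> 0 <= s -> 0 <= t -> 0 <= a -> 0 <= b -> 0 <= c ->
  P0 r s t a b c = 0 -> Disj0 r s t a b c.
Proof.
move=> Hr Hs Ht Ha Hb Hc; rewrite /Disj0.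
have [->|[c1 Hc1 ->]] := int_split Hc; [ have [->|[a2 Ha2 ->]] := int_split Ha; [ have [->|[b3 Hb3 ->]] := int_split Hb; [ set X := P0 _ _ _ _ _ _; (have -> : X = - (8 + (0)) by rewrite /X /P0; ring); move=> HQ; exfalso; apply: (negC _ _ HQ); [ by [] | POS ] | have [->|[r4 Hr4 ->]] := int_split Hr; [ have [->|[b5 Hb5 ->]] := int_split Hb3; [ move=> _; lia | set X := P0 _ _ _ _ _ _; (have -> : X = 8 + (8*b5) by rewrite /X /P0; ring); move=> HQ; exfalso; apply: (posC _ _ HQ); [ by [] | POS ] ] | set X := P0 _ _ _ _ _ _; (have -> : X = - (2 + (6*b3*b3 + 2*r4 + 8*r4*b3 + 6*r4*b3*b3)) by rewrite /X /P0; ring); move=> HQ; exfalso; apply: (negC _ _ HQ); [ by [] | POS ] ] ] | have [->|[b6 Hb6 ->]] := int_split Hb; [ have [->|[a7 Ha7 ->]] := int_split Ha2; [ move=> _; lia | set X := P0 _ _ _ _ _ _; (have -> : X = 8 + (8*a7) by rewrite /X /P0; ring); move=> HQ; exfalso; apply: (posC _ _ HQ); [ by [] | POS ] ] | set X := P0 _ _ _ _ _ _; (have -> : X = - (4 + (4*b6 + 4*a2 + 12*a2*b6 + 2*r + 8*r*b6 + 6*r*b6*b6)) by rewrite /X /P0; ring); move=> HQ; exfalso; apply: (negC _ _ HQ); [ by [] | POS ] ] ] | have [->|[a8 Ha8 ->]] := int_split Ha; [ have [->|[b9 Hb9 ->]] := int_split Hb; [ have [->|[t10 Ht10 ->]]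 := int_split Ht; [ have [->|[s11 Hs11 ->]] := int_split Hs; [ have [->|[c12 Hc12 ->]] := int_split Hc1; [ move=> _; lia | set X := P0 _ _ _ _ _ _; (have -> : X = 8 + (8*c12) by rewrite /X /P0; ring); move=> HQ; exfalso; apply: (posC _ _ HQ); [ by [] | POS ] ] | set X := P0 _ _ _ _ _ _; (have -> : X = - (2 + (6*c1*c1 + 2*s11 + 8*s11*c1 + 6*s11*c1*c1)) by rewrite /X /P0; ring); move=> HQ; exfalso; apply: (negC _ _ HQ); [ by [] | POS ] ] | have [->|[c13 Hc13 ->]] := int_split Hc1; [ have [->|[t14 Ht14 ->]] := int_split Ht10; [ set X := P0 _ _ _ _ _ _; (have -> : X = - (2 + (0)) by rewrite /X /P0; ring); move=> HQ; exfalso; apply: (negC _ _ HQ); [ by [] | POS ] | have [->|[s15 Hs15 ->]] := int_split Hs; [ have [->|[r16 Hr16 ->]] := int_split Hr; [ set X := P0 _ _ _ _ _ _; (have -> : X = - (4 + (2*t14)) by rewrite /X /P0; ring); move=> HQ; exfalso; apply: (negC _ _ HQ); [ by [] | POS ] | have [->|[t17 Ht17 ->]] := int_split Ht14; [ have [->|[r18 Hr18 ->]] := int_split Hr16; [ set X := P0 _ _ _ _ _ _; (have -> : X = - (2 + (0)) by rewrite /X /P0; ring); move=> HQ; exfalso; apply: (negC _ _ HQ); [ by [] | POS ] | have [->|[r19 Hr19 ->]] := int_split Hr18; [ move=> _; lia | set X := P0 _ _ _ _ _ _; (have -> : X = 2 + (2*r19) by rewrite /X /P0; ring); move=> HQ;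 exfalso; apply: (posC _ _ HQ); [ by [] | POS ] ] ] | have [->|[t20 Ht20 ->]] := int_split Ht17; [ have [->|[r21 Hr21 ->]] := int_split Hr16; [ move=> _; lia | set X := P0 _ _ _ _ _ _; (have -> : X = 6 + (6*r21) by rewrite /X /P0; ring); move=> HQ; exfalso; apply: (posC _ _ HQ); [ by [] | POS ] ] | set X := P0 _ _ _ _ _ _; (have -> : X = 4 + (5*t20 + 1*t20*t20 + 12*r16 + 7*r16*t20 + 1*r16*t20*t20) by rewrite /X /P0; ring); move=> HQ; exfalso; apply: (posC _ _ HQ); [ by [] | POS ] ] ] ] | have [->|[s22 Hs22 ->]] := int_split Hs15; [ have [->|[r23 Hr23 ->]] := int_split Hr; [ set X := P0 _ _ _ _ _ _; (have -> : X = - (2 + (0)) by rewrite /X /P0; ring); move=> HQ; exfalso; apply: (negC _ _ HQ); [ by [] | POS ] | have [->|[t24 Ht24 ->]] := int_split Ht14; [ have [->|[r25 Hr25 ->]] := int_split Hr23; [ move=> _; lia | set X := P0 _ _ _ _ _ _; (have -> : X = 2 + (2*r25) by rewrite /X /P0; ring); move=> HQ; exfalso; apply: (posC _ _ HQ); [ by [] | POS ] ] | set X := P0 _ _ _ _ _ _; (have -> : X = 4 + (5*t24 + 1*t24*t24 + 6*r23 + 5*r23*t24 + 1*r23*t24*t24) by rewrite /X /P0; ring); move=> HQ; exfalso; apply: (posC _ _ HQ); [ by [] | POS ] ] ] | have [->|[t26 Ht26 ->]] := int_split Ht14; [ have [->|[s27 Hs27 ->]] := int_split Hs22; [ have [->|[r28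 Hr28 ->]] := int_split Hr; [ move=> _; lia | set X := P0 _ _ _ _ _ _; (have -> : X = 2 + (2*r28) by rewrite /X /P0; ring); move=> HQ; exfalso; apply: (posC _ _ HQ); [ by [] | POS ] ] | set X := P0 _ _ _ _ _ _; (have -> : X = 2 + (2*s27 + 2*r) by rewrite /X /P0; ring); move=> HQ; exfalso; apply: (posC _ _ HQ); [ by [] | POS ] ] | set X := P0 _ _ _ _ _ _; (have -> : X = 2 + (2*t26 + 4*s22 + 2*s22*t26 + 6*r + 5*r*t26 + 1*r*t26*t26) by rewrite /X /P0; ring); move=> HQ; exfalso; apply: (posC _ _ HQ); [ by [] | POS ] ] ] ] ] | have [->|[s29 Hs29 ->]] := int_split Hs; [ have [->|[r30 Hr30 ->]] := int_split Hr; [ set X := P0 _ _ _ _ _ _; (have -> : X = - (8 + (12*c13 + 6*c13*c13 + 16*t10 + 20*t10*c13 + 6*t10*c13*c13)) by rewrite /X /P0; ring); move=> HQ; exfalso; apply: (negC _ _ HQ); [ by [] | POS ] | set X := P0 _ _ _ _ _ _; (have -> : X = 4 + (14*c13 + 12*c13*c13 + 4*c13*c13*c13 + 16*t10 + 42*t10*c13 + 33*t10*c13*c13 + 8*t10*c13*c13*c13 + 20*t10*t10 + 36*t10*t10*c13 + 21*t10*t10*c13*c13 + 4*t10*t10*c13*c13*c13 + 12*r30 + 26*r30*c13 + 18*r30*c13*c13 + 4*r30*c13*c13*c13 + 32*r30*t10 + 62*r30*t10*c13 + 39*r30*t10*c13*c13 + 8*r30*t10*c13*c13*c13 + 20*r30*t10*t10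 + 36*r30*t10*t10*c13 + 21*r30*t10*t10*c13*c13 + 4*r30*t10*t10*c13*c13*c13) by rewrite /X /P0; ring); move=> HQ; exfalso; apply: (posC _ _ HQ); [ by [] | POS ] ] | set X := P0 _ _ _ _ _ _; (have -> : X = 16 + (40*c13 + 30*c13*c13 + 8*c13*c13*c13 + 24*t10 + 52*t10*c13 + 36*t10*c13*c13 + 8*t10*c13*c13*c13 + 24*s29 + 52*s29*c13 + 36*s29*c13*c13 + 8*s29*c13*c13*c13 + 40*s29*t10 + 72*s29*t10*c13 + 42*s29*t10*c13*c13 + 8*s29*t10*c13*c13*c13 + 12*r + 26*r*c13 + 18*r*c13*c13 + 4*r*c13*c13*c13 + 32*r*t10 + 62*r*t10*c13 + 39*r*t10*c13*c13 + 8*r*t10*c13*c13*c13 + 20*r*t10*t10 + 36*r*t10*t10*c13 + 21*r*t10*t10*c13*c13 + 4*r*t10*t10*c13*c13*c13) by rewrite /X /P0; ring); move=> HQ; exfalso; apply: (posC _ _ HQ); [ by [] | POS ] ] ] ] | have [->|[s31 Hs31 ->]] := int_split Hs; [ have [->|[r32 Hr32 ->]] := int_split Hr; [ set X := P0 _ _ _ _ _ _; (have -> : X = - (4 + (4*c1 + 4*b9 + 12*b9*c1 + 2*t + 8*t*c1 + 6*t*c1*c1)) by rewrite /X /P0; ring); move=> HQ; exfalso; apply: (negC _ _ HQ); [ by [] | POS ] | have [->|[c33 Hc33 ->]] := int_split Hc1; [ have [->|[b34 Hb34 ->]] := int_split Hb9; [ have [->|[t35 Ht35 ->]] := int_split Ht;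 [ have [->|[r36 Hr36 ->]] := int_split Hr32; [ move=> _; lia | set X := P0 _ _ _ _ _ _; (have -> : X = 4 + (4*r36) by rewrite /X /P0; ring); move=> HQ; exfalso; apply: (posC _ _ HQ); [ by [] | POS ] ] | set X := P0 _ _ _ _ _ _; (have -> : X = 4 + (5*t35 + 1*t35*t35 + 10*r32 + 7*r32*t35 + 1*r32*t35*t35) by rewrite /X /P0; ring); move=> HQ; exfalso; apply: (posC _ _ HQ); [ by [] | POS ] ] | set X := P0 _ _ _ _ _ _; (have -> : X = 12 + (18*b34 + 6*b34*b34 + 9*t + 6*t*b34 + 1*t*t + 20*r32 + 22*r32*b34 + 6*r32*b34*b34 + 11*r32*t + 6*r32*t*b34 + 1*r32*t*t) by rewrite /X /P0; ring); move=> HQ; exfalso; apply: (posC _ _ HQ); [ by [] | POS ] ] | set X := P0 _ _ _ _ _ _; (have -> : X = 2 + (2*c33 + 12*b9 + 6*b9*c33 + 18*b9*b9 + 12*b9*b9*c33 + 12*t + 12*t*c33 + 3*t*c33*c33 + 36*t*b9 + 42*t*b9*c33 + 12*t*b9*c33*c33 + 20*t*t + 36*t*t*c33 + 21*t*t*c33*c33 + 4*t*t*c33*c33*c33 + 10*r32 + 6*r32*c33 + 28*r32*b9 + 18*r32*b9*c33 + 18*r32*b9*b9 + 12*r32*b9*b9*c33 + 28*r32*t + 32*r32*t*c33 + 9*r32*t*c33*c33 + 36*r32*t*b9 + 42*r32*t*b9*c33 + 12*r32*t*b9*c33*c33 + 20*r32*t*t + 36*r32*t*t*c33 + 21*r32*t*t*c33*c33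 + 4*r32*t*t*c33*c33*c33) by rewrite /X /P0; ring); move=> HQ; exfalso; apply: (posC _ _ HQ); [ by [] | POS ] ] ] | have [->|[c37 Hc37 ->]] := int_split Hc1; [ have [->|[b38 Hb38 ->]] := int_split Hb9; [ have [->|[s39 Hs39 ->]] := int_split Hs31; [ have [->|[r40 Hr40 ->]] := int_split Hr; [ move=> _; lia | set X := P0 _ _ _ _ _ _; (have -> : X = 4 + (5*t + 1*t*t + 4*r40 + 5*r40*t + 1*r40*t*t) by rewrite /X /P0; ring); move=> HQ; exfalso; apply: (posC _ _ HQ); [ by [] | POS ] ] | set X := P0 _ _ _ _ _ _; (have -> : X = 4 + (2*t + 4*s39 + 2*s39*t + 4*r + 5*r*t + 1*r*t*t) by rewrite /X /P0; ring); move=> HQ; exfalso; apply: (posC _ _ HQ); [ by [] | POS ] ] | set X := P0 _ _ _ _ _ _; (have -> : X = 2 + (2*b38 + 10*s31 + 6*s31*b38 + 2*s31*t + 20*r + 22*r*b38 + 6*r*b38*b38 + 11*r*t + 6*r*t*b38 + 1*r*t*t) by rewrite /X /P0; ring); move=> HQ; exfalso; apply: (posC _ _ HQ); [ by [] | POS ] ] | set X := P0 _ _ _ _ _ _; (have -> : X = 12 + (18*c37 + 6*c37*c37 + 20*b9 + 30*b9*c37 + 12*b9*c37*c37 + 24*t + 52*t*c37 + 36*t*c37*c37 + 8*t*c37*c37*c37 + 20*s31 + 22*s31*c37 + 6*s31*c37*c37 + 36*s31*b9 + 42*s31*b9*c37 + 12*s31*b9*c37*c37 + 40*s31*t + 72*s31*t*c37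 + 42*s31*t*c37*c37 + 8*s31*t*c37*c37*c37 + 10*r + 6*r*c37 + 28*r*b9 + 18*r*b9*c37 + 18*r*b9*b9 + 12*r*b9*b9*c37 + 28*r*t + 32*r*t*c37 + 9*r*t*c37*c37 + 36*r*t*b9 + 42*r*t*b9*c37 + 12*r*t*b9*c37*c37 + 20*r*t*t + 36*r*t*t*c37 + 21*r*t*t*c37*c37 + 4*r*t*t*c37*c37*c37) by rewrite /X /P0; ring); move=> HQ; exfalso; apply: (posC _ _ HQ); [ by [] | POS ] ] ] ] | have [->|[b41 Hb41 ->]] := int_split Hb; [ have [->|[t42 Ht42 ->]] := int_split Ht; [ set X := P0 _ _ _ _ _ _; (have -> : X = - (4 + (4*c1 + 4*a8 + 12*a8*c1 + 2*s + 8*s*c1 + 6*s*c1*c1)) by rewrite /X /P0; ring); move=> HQ; exfalso; apply: (negC _ _ HQ); [ by [] | POS ] | have [->|[c43 Hc43 ->]] := int_split Hc1; [ have [->|[a44 Ha44 ->]] := int_split Ha8; [ have [->|[t45 Ht45 ->]] := int_split Ht42; [ move=> _; lia | set X := P0 _ _ _ _ _ _; (have -> : X = 4 + (4*t45 + 2*s + 2*s*t45 + 2*r + 3*r*t45 + 1*r*t45*t45) by rewrite /X /P0; ring); move=> HQ; exfalso; apply: (posC _ _ HQ); [ by [] | POS ] ] | set X := P0 _ _ _ _ _ _; (have -> : X = 2 + (2*a44 + 10*t42 + 6*t42*a44 + 2*s*t42 + 1*r*t42 + 1*r*t42*t42) by rewrite /X /P0; ring); move=> HQ; exfalso; apply: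 (posC _ _ HQ); [ by [] | POS ] ] | set X := P0 _ _ _ _ _ _; (have -> : X = 12 + (18*c43 + 6*c43*c43 + 20*a8 + 30*a8*c43 + 12*a8*c43*c43 + 20*t42 + 22*t42*c43 + 6*t42*c43*c43 + 36*t42*a8 + 42*t42*a8*c43 + 12*t42*a8*c43*c43 + 24*s + 52*s*c43 + 36*s*c43*c43 + 8*s*c43*c43*c43 + 40*s*t42 + 72*s*t42*c43 + 42*s*t42*c43*c43 + 8*s*t42*c43*c43*c43 + 12*r + 26*r*c43 + 18*r*c43*c43 + 4*r*c43*c43*c43 + 32*r*t42 + 62*r*t42*c43 + 39*r*t42*c43*c43 + 8*r*t42*c43*c43*c43 + 20*r*t42*t42 + 36*r*t42*t42*c43 + 21*r*t42*t42*c43*c43 + 4*r*t42*t42*c43*c43*c43) by rewrite /X /P0; ring); move=> HQ; exfalso; apply: (posC _ _ HQ); [ by [] | POS ] ] ] | set X := P0 _ _ _ _ _ _; (have -> : X = 4 + (8*c1 + 8*b41 + 12*b41*c1 + 8*a8 + 12*a8*c1 + 12*a8*b41 + 24*a8*b41*c1 + 4*t + 10*t*c1 + 6*t*c1*c1 + 6*t*a8 + 18*t*a8*c1 + 12*t*a8*c1*c1 + 4*s + 10*s*c1 + 6*s*c1*c1 + 6*s*b41 + 18*s*b41*c1 + 12*s*b41*c1*c1 + 2*s*t + 12*s*t*c1 + 18*s*t*c1*c1 + 8*s*t*c1*c1*c1 + 4*r + 6*r*c1 + 10*r*b41 + 18*r*b41*c1 + 6*r*b41*b41 + 12*r*b41*b41*c1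 + 5*r*t + 14*r*t*c1 + 9*r*t*c1*c1 + 6*r*t*b41 + 18*r*t*b41*c1 + 12*r*t*b41*c1*c1 + 1*r*t*t + 6*r*t*t*c1 + 9*r*t*t*c1*c1 + 4*r*t*t*c1*c1*c1) by rewrite /X /P0; ring); move=> HQ; exfalso; apply: (posC _ _ HQ); [ by [] | POS ] ] ] ].
Qed.

Lemma core1 (r s t a b c : int) : 0 <= r -> 0 <= s -> 0 <= t -> 0 <= a -> 0 <= b -> 0 <= c ->
  P1s r s t a b c = 0 -> Disj1 r s t a b c.
Proof.
move=> Hr Hs Ht Ha Hb Hc; rewrite /Disj1.
have [->|[c1 Hc1 ->]] := int_split Hc; [ have [->|[a2 Ha2 ->]] := int_split Ha; [ have [->|[b3 Hb3 ->]] := int_split Hb; [ set X := P1s _ _ _ _ _ _; (have -> : X = - (8 + (0)) by rewrite /X /P1s /P1; ring); move=> HQ; exfalso; apply: (negC _ _ HQ); [ by [] | POS ] | have [->|[r4 Hr4 ->]] := int_split Hr; [ have [->|[b5 Hb5 ->]] := int_split Hb3; [ move=> _; lia | set X := P1s _ _ _ _ _ _; (have -> : X = 8 + (8*b5) by rewrite /X /P1s /P1; ring); move=> HQ; exfalso; apply: (posC _ _ HQ); [ by [] | POS ] ] | set X := P1s _ _ _ _ _ _; (have -> : X = - (2 + (6*b3*b3 + 2*r4 + 8*r4*b3 + 6*r4*b3*b3)) by rewrite /X /P1s /P1; ring); move=> HQ; exfalso; apply: (negC _ _ HQ); [ by [] | POS ] ] ] | have [->|[b6 Hb6 ->]] :=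 int_split Hb; [ have [->|[a7 Ha7 ->]] := int_split Ha2; [ move=> _; lia | set X := P1s _ _ _ _ _ _; (have -> : X = 8 + (8*a7) by rewrite /X /P1s /P1; ring); move=> HQ; exfalso; apply: (posC _ _ HQ); [ by [] | POS ] ] | set X := P1s _ _ _ _ _ _; (have -> : X = - (4 + (4*b6 + 4*a2 + 12*a2*b6 + 2*r + 8*r*b6 + 6*r*b6*b6)) by rewrite /X /P1s /P1; ring); move=> HQ; exfalso; apply: (negC _ _ HQ); [ by [] | POS ] ] ] | have [->|[c8 Hc8 ->]] := int_split Hc1; [ have [->|[a9 Ha9 ->]] := int_split Ha; [ have [->|[b10 Hb10 ->]] := int_split Hb; [ have [->|[t11 Ht11 ->]] := int_split Ht; [ have [->|[s12 Hs12 ->]] := int_split Hs; [ move=> _; lia | set X := P1s _ _ _ _ _ _; (have -> : X = 2 + (2*s12) by rewrite /X /P1s /P1; ring); move=> HQ; exfalso; apply: (posC _ _ HQ); [ by [] | POS ] ] | set X := P1s _ _ _ _ _ _; (have -> : X = 2 + (2*t11 + 6*s + 4*s*t11 + 2*r + 3*r*t11 + 1*r*t11*t11) by rewrite /X /P1s /P1; ring); move=> HQ; exfalso; apply: (posC _ _ HQ); [ by [] | POS ] ] | set X := P1s _ _ _ _ _ _; (have -> : X = 2 + (2*b10 + 2*t + 8*s + 6*s*b10 + 4*s*t + 10*r + 16*r*b10 + 6*r*b10*b10 + 7*r*t + 6*r*t*b10 + 1*r*t*t) by rewrite /X /P1s /P1; ring); move=> HQ; exfalso; apply: (posC _ _ HQ);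 [ by [] | POS ] ] | set X := P1s _ _ _ _ _ _; (have -> : X = 2 + (14*b + 2*a9 + 12*a9*b + 8*t + 6*t*a9 + 2*s + 6*s*b + 4*s*t + 4*r*b + 6*r*b*b + 1*r*t + 6*r*t*b + 1*r*t*t) by rewrite /X /P1s /P1; ring); move=> HQ; exfalso; apply: (posC _ _ HQ); [ by [] | POS ] ] | set X := P1s _ _ _ _ _ _; (have -> : X = 8 + (16*c8 + 12*c8*c8 + 4*c8*c8*c8 + 20*b + 30*b*c8 + 12*b*c8*c8 + 20*a + 30*a*c8 + 12*a*c8*c8 + 36*a*b + 24*a*b*c8 + 16*t + 28*t*c8 + 18*t*c8*c8 + 4*t*c8*c8*c8 + 36*t*a + 42*t*a*c8 + 12*t*a*c8*c8 + 16*s + 28*s*c8 + 18*s*c8*c8 + 4*s*c8*c8*c8 + 36*s*b + 42*s*b*c8 + 12*s*b*c8*c8 + 32*s*t + 48*s*t*c8 + 24*s*t*c8*c8 + 4*s*t*c8*c8*c8 + 12*r + 26*r*c8 + 18*r*c8*c8 + 4*r*c8*c8*c8 + 28*r*b + 36*r*b*c8 + 12*r*b*c8*c8 + 18*r*b*b + 12*r*b*b*c8 + 32*r*t + 62*r*t*c8 + 39*r*t*c8*c8 + 8*r*t*c8*c8*c8 + 36*r*t*b + 42*r*t*b*c8 + 12*r*t*b*c8*c8 + 20*r*t*t + 36*r*t*t*c8 + 21*r*t*t*c8*c8 + 4*r*t*t*c8*c8*c8) by rewrite /X /P1s /P1; ring); move=> HQ; exfalso; apply: (posC _ _ HQ);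 [ by [] | POS ] ] ].
Qed.


Definition m0 : 'I_3 := @Ordinal 3 0 isT.
Definition m1 : 'I_3 := @Ordinal 3 1 isT.
Definition m2 : 'I_3 := @Ordinal 3 2 isT.

Lemma sum6 (F : 'I_6 -> int) : \sum_(i < 6) F i = F i0 + F i1 + F i2 + F i3 + F i4 + F i5.
Proof.
rewrite !big_ord_recl big_ord0 addr0 !addrA.
by congr (_ + _ + _ + _ + _ + _); congr F; apply: val_inj.
Qed.
Lemma sum6c (P : pred 'I_6) (F : 'I_6 -> int) : \sum_(i < 6 | P i) F i =
  (if P i0 then F i0 else 0) + (if P i1 then F i1 else 0) + (if P i2 then F i2 else 0) +
  (if P i3 then F i3 else 0) + (if P i4 then F i4 else 0) + (if P i5 then F i5 else 0).
Proof. by rewrite big_mkcond sum6. Qed.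
Lemma sum3 (F : 'I_3 -> int) : \sum_(i < 3) F i = F m0 + F m1 + F m2.
Proof.
rewrite !big_ord_recl big_ord0 addr0 !addrA.
by congr (_ + _ + _); congr F; apply: val_inj.
Qed.
Lemma ord6_ind (P : 'I_6 -> Prop) : P i0 -> P i1 -> P i2 -> P i3 -> P i4 -> P i5 -> forall i, P i.
Proof.
move=> h0 h1 h2 h3 h4 h5 [[|[|[|[|[|[|i]]]]]] Hi] //.
- by have -> : Ordinal Hi = i0 by apply: val_inj.
- by have -> : Ordinal Hi = i1 by apply: val_inj.
- by have -> : Ordinal Hi = i2 by apply: val_inj.
- by have -> : Ordinal Hi = i3 by apply: val_inj.
- by have -> : Ordinal Hi = i4 by apply: val_inj.
- by have -> : Ordinal Hi = i5 by apply: val_inj.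
Qed.

Section S.
Variables (k : kind) (r s t : nat) (T : 'I_6 -> 'I_6 -> 'I_6 -> int).
Hypothesis HT : IsIntersectionForm k r s t T.

Let G (b c : divisor) (i : 'I_6) := \sum_(j < 6) \sum_(l < 6) b j * c l * T i j l.

Lemma interG a b c : inter T a b c = \sum_(i < 6) a i * G b c i.
Proof.
rewrite /inter /G; apply: eq_bigr => i _; rewrite big_distrr; apply: eq_bigr => j _.
rewrite big_distrr; apply: eq_bigr => l _; by rewrite /= !mulrA.
Qed.

Lemma inter_lin1 a a' b c : linEq k r s t a a' -> inter T a b c = inter T a' b c.
Proof.
case: HT => _ _ Hrel _ [m Hm].
apply/eqP; rewrite -subr_eq0 !interG -sumrB.
rewrite (eq_bigr (fun i => \sum_(n < 3) m n * (rayc k r s t i n * G b c i))); last first.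
  by move=> i _; rewrite -mulrBl Hm big_distrl; apply: eq_bigr => n _; rewrite mulrA.
rewrite exchange_big /= big1 // => n _; rewrite -big_distrr /=.
rewrite (_ : \sum_(i<6) _ = \sum_(j<6) \sum_(l<6) b j * c l * \sum_(i<6) rayc k r s t i n * T i j l).
  by rewrite big1 ?mulr0 // => j _; rewrite big1 // => l _; rewrite Hrel mulr0.
rewrite /G; under eq_bigr do rewrite big_distrr.
rewrite exchange_big; apply: eq_bigr => j _ /=.
under eq_bigr do rewrite big_distrr.
rewrite exchange_big; apply: eq_bigr => l _ /=.
rewrite big_distrr; apply: eq_bigr => i _ /=; ring.
Qed.

Lemma inter_sym12 a b c : inter T a b c = inter T b a c.
Proof.
case: HT => Hsym _ _ _.
rewrite /inter exchange_big; apply: eq_bigr => j _; apply: eq_bigr => i _; apply: eq_bigr => l _.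
rewrite (Hsym i j l).1; ring.
Qed.
Lemma inter_sym23 a b c : inter T a b c = inter T a c b.
Proof.
case: HT => Hsym _ _ _.
rewrite /inter; apply: eq_bigr => i _; rewrite exchange_big; apply: eq_bigr => l _; apply: eq_bigr => j _.
rewrite (Hsym i j l).2; ring.
Qed.
Lemma inter_lin2 a b b' c : linEq k r s t b b' -> inter T a b c = inter T a b' c.
Proof. by move=> h; rewrite inter_sym12 (inter_lin1 _ _ h) inter_sym12. Qed.
Lemma inter_lin3 a b c c' : linEq k r s t c c' -> inter T a b c = inter T a b c'.
Proof. by move=> h; rewrite inter_sym23 (inter_lin2 _ _ h) inter_sym23. Qed.

Definition sg : int := if k is Y0 then 1 else -1.
Definition cx (a : divisor) : int := a i0 + a i1 + r%:Z * a i3 + (t%:Z * r%:Z + sg * s%:Z) * a i5.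
Definition cy (a : divisor) : int := a i2 + a i3 + t%:Z * a i5.
Definition cz (a : divisor) : int := a i4 + a i5.
Definition cdiv (a : divisor) : divisor := fun i => cx a * D 0 i + cy a * D 2 i + cz a * D 4 i.

Lemma lin_cdiv a : linEq k r s t a (cdiv a).
Proof.
exists (fun n : 'I_3 => match val n with 0%N => - a i1 - r%:Z * a i3 - t%:Z * r%:Z * a i5
   | 1%N => - a i3 - t%:Z * a i5 | _ => - a i5 end).
apply: ord6_ind; rewrite sum3 /cdiv /cx /cy /cz /sg /D /rayc /=; case: k => /=; ring.
Qed.

Lemma Tz (i j l x y : 'I_6) : x \in [set i; j; l] -> y \in [set i; j; l] ->
  (forall C, maxConeY C -> (x \notin C) || (y \notin C)) -> T i j l = 0.
Proof. case: HT => _ Hz _ _ hx hy hC; apply: Hz; exact: (nocone hx hy hC). Qed.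

Lemma s12 i j l : T i j l = T j i l. Proof. by case: HT => Hs _ _ _; case: (Hs i j l). Qed.
Lemma s23 i j l : T i j l = T i l j. Proof. by case: HT => Hs _ _ _; case: (Hs i j l). Qed.

Lemma rel m j l : \sum_(i < 6) rayc k r s t i m * T i j l = 0.
Proof. by case: HT => _ _ Hr _. Qed.
Lemma rel6 m j l : rayc k r s t i0 m * T i0 j l + rayc k r s t i1 m * T i1 j l + rayc k r s t i2 m * T i2 j l
  + rayc k r s t i3 m * T i3 j l + rayc k r s t i4 m * T i4 j l + rayc k r s t i5 m * T i5 j l = 0.
Proof. by rewrite -(rel m j l) sum6. Qed.

Lemma Tvals :
  T i0 i0 i0 = 0 /\ T i0 i0 i2 = 0 /\ T i0 i0 i4 = 0 /\ T i0 i2 i2 = 0 /\ T i0 i2 i4 = 1 /\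
      T i0 i4 i4 = - t%:Z /\ T i2 i2 i2 = 0 /\ T i2 i2 i4 = - r%:Z /\
      T i2 i4 i4 = - (sg * s%:Z) /\ T i4 i4 i4 = 2 * sg * s%:Z * t%:Z + r%:Z * t%:Z ^+ 2.
Proof.
case: HT => _ _ _ Hone.
have z01 i j l : i0 \in [set i; j; l] -> i1 \in [set i; j; l] -> T i j l = 0.
  by move=> h1 h2; apply: (Tz h1 h2 pair01).
have z23 i j l : i2 \in [set i; j; l] -> i3 \in [set i; j; l] -> T i j l = 0.
  by move=> h1 h2; apply: (Tz h1 h2 pair23).
have z45 i j l : i4 \in [set i; j; l] -> i5 \in [set i; j; l] -> T i j l = 0.
  by move=> h1 h2; apply: (Tz h1 h2 pair45).
have e024 : T i0 i2 i4 = 1 by apply: Hone maxC024.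
have e214 : T i2 i1 i4 = 1 by apply: Hone maxC214.
have e304 : T i3 i0 i4 = 1 by apply: Hone maxC304.
have e000 : T i0 i0 i0 = 0.
  have := rel6 m0 i0 i0; rewrite /rayc /= (z01 i1 i0 i0) ?inE //. lia.
have e002 : T i0 i0 i2 = 0.
  have := rel6 m0 i0 i2; rewrite /rayc /= (z01 i1 i0 i2) ?inE //. lia.
have e004 : T i0 i0 i4 = 0.
  have := rel6 m0 i0 i4; rewrite /rayc /= (z01 i1 i0 i4) ?inE //. lia.
have e220 : T i2 i2 i0 = 0.
  have := rel6 m1 i2 i0; rewrite /rayc /= (z01 i1 i2 i0) ?inE // (z23 i3 i2 i0) ?inE //. lia.
have e224 : T i2 i2 i4 = - r%:Z.
  have := rel6 m1 i2 i4; rewrite /rayc /= (z23 i3 i2 i4) ?inE // (s12 i1 i2 i4) e214. lia.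
have e112 : T i1 i1 i2 = 0.
  have := rel6 m0 i1 i2; rewrite /rayc /= (z01 i0 i1 i2) ?inE //. lia.
have e212 : T i2 i1 i2 = 0.
  have := rel6 m1 i1 i2; rewrite /rayc /= (z23 i3 i1 i2) ?inE // e112. lia.
have e222 : T i2 i2 i2 = 0.
  have := rel6 m1 i2 i2; rewrite /rayc /= (z23 i3 i2 i2) ?inE // (s12 i1 i2 i2) e212. lia.
have e404 : T i4 i0 i4 = - t%:Z.
  have := rel6 m2 i0 i4; rewrite /rayc /= (z45 i5 i0 i4) ?inE // e004 e304. lia.
have e424 : T i4 i2 i4 = - (sg * s%:Z).
  have := rel6 m2 i2 i4; rewrite /rayc /= (z45 i5 i2 i4) ?inE // (z23 i3 i2 i4) ?inE // e024 /sg.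
  case: k => /=; lia.
have e044 : T i0 i4 i4 = - t%:Z by rewrite s12.
have e144 : T i1 i4 i4 = - t%:Z.
  have := rel6 m0 i4 i4; rewrite /rayc /= e044. lia.
have e244 : T i2 i4 i4 = - (sg * s%:Z) by rewrite s12.
have e344 : T i3 i4 i4 = - (r%:Z * t%:Z) - sg * s%:Z.
  have := rel6 m1 i4 i4; rewrite /rayc /= e144 e244 => h.
  apply/eqP; rewrite -subr_eq0 -oppr_eq0; apply/eqP; rewrite -h; ring.
have e444 : T i4 i4 i4 = 2 * sg * s%:Z * t%:Z + r%:Z * t%:Z ^+ 2.
  have := rel6 m2 i4 i4; rewrite /rayc /= e044 e344 (z45 i5 i4 i4) ?inE // => h.
  apply/eqP; rewrite -subr_eq0; apply/eqP; rewrite -h /sg; case: k => /=; ring.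
have e022 : T i0 i2 i2 = 0 by rewrite (s12 i0 i2 i2) (s23 i2 i0 i2).
by do !split.
Qed.

Definition Fm (x1 y1 z1 x2 y2 z2 x3 y3 z3 : int) : int :=
  x1 * x2 * x3 * 0 +
  x1 * x2 * y3 * 0 +
  x1 * x2 * z3 * 0 +
  x1 * y2 * x3 * 0 +
  x1 * y2 * y3 * 0 +
  x1 * y2 * z3 * 1 +
  x1 * z2 * x3 * 0 +
  x1 * z2 * y3 * 1 +
  x1 * z2 * z3 * (- t%:Z) +
  y1 * x2 * x3 * 0 +
  y1 * x2 * y3 * 0 +
  y1 * x2 * z3 * 1 +
  y1 * y2 * x3 * 0 +
  y1 * y2 * y3 * 0 +
  y1 * y2 * z3 * (- r%:Z) +
  y1 * z2 * x3 * 1 +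
  y1 * z2 * y3 * (- r%:Z) +
  y1 * z2 * z3 * (- (sg * s%:Z)) +
  z1 * x2 * x3 * 0 +
  z1 * x2 * y3 * 1 +
  z1 * x2 * z3 * (- t%:Z) +
  z1 * y2 * x3 * 1 +
  z1 * y2 * y3 * (- r%:Z) +
  z1 * y2 * z3 * (- (sg * s%:Z)) +
  z1 * z2 * x3 * (- t%:Z) +
  z1 * z2 * y3 * (- (sg * s%:Z)) +
  z1 * z2 * z3 * (2 * sg * s%:Z * t%:Z + r%:Z * t%:Z ^+ 2).

Lemma interN a b c : inter T a b c = \sum_(i < 6) a i * (\sum_(j < 6) b j * (\sum_(l < 6) c l * T i j l)).
Proof.
rewrite /inter; apply: eq_bigr => i _; rewrite big_distrr; apply: eq_bigr => j _ /=.
rewrite big_distrr big_distrr; apply: eq_bigr => l _; by rewrite /= !mulrA.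
Qed.

Lemma sum_cdiv a (f : 'I_6 -> int) : \sum_(i < 6) cdiv a i * f i = cx a * f i0 + cy a * f i2 + cz a * f i4.
Proof. rewrite sum6 /cdiv /D /=; ring. Qed.

Lemma interE a b c : inter T a b c =
  Fm (cx a) (cy a) (cz a) (cx b) (cy b) (cz b) (cx c) (cy c) (cz c).
Proof.
rewrite (inter_lin1 _ _ (lin_cdiv a)) (inter_lin2 _ _ (lin_cdiv b)) (inter_lin3 _ _ (lin_cdiv c)).
rewrite interN !sum_cdiv.
have [e000 [e002 [e004 [e022 [e024 [e044 [e222 [e224 [e244 e444]]]]]]]]] := Tvals.
have f000 : T i0 i0 i0 = 0 by rewrite  e000.
have f002 : T i0 i0 i2 = 0 by rewrite  e002.
have f004 : T i0 i0 i4 = 0 by rewrite  e004.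
have f020 : T i0 i2 i0 = 0 by rewrite (s23 i0 i2 i0) e002.
have f022 : T i0 i2 i2 = 0 by rewrite  e022.
have f024 : T i0 i2 i4 = 1 by rewrite  e024.
have f040 : T i0 i4 i0 = 0 by rewrite (s23 i0 i4 i0) e004.
have f042 : T i0 i4 i2 = 1 by rewrite (s23 i0 i4 i2) e024.
have f044 : T i0 i4 i4 = (- t%:Z) by rewrite  e044.
have f200 : T i2 i0 i0 = 0 by rewrite (s12 i2 i0 i0) (s23 i0 i2 i0) e002.
have f202 : T i2 i0 i2 = 0 by rewrite (s12 i2 i0 i2) e022.
have f204 : T i2 i0 i4 = 1 by rewrite (s12 i2 i0 i4) e024.
have f220 : T i2 i2 i0 = 0 by rewrite (s23 i2 i2 i0) (s12 i2 i0 i2) e022.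
have f222 : T i2 i2 i2 = 0 by rewrite  e222.
have f224 : T i2 i2 i4 = (- r%:Z) by rewrite  e224.
have f240 : T i2 i4 i0 = 1 by rewrite (s23 i2 i4 i0) (s12 i2 i0 i4) e024.
have f242 : T i2 i4 i2 = (- r%:Z) by rewrite (s23 i2 i4 i2) e224.
have f244 : T i2 i4 i4 = (- (sg * s%:Z)) by rewrite  e244.
have f400 : T i4 i0 i0 = 0 by rewrite (s12 i4 i0 i0) (s23 i0 i4 i0) e004.
have f402 : T i4 i0 i2 = 1 by rewrite (s12 i4 i0 i2) (s23 i0 i4 i2) e024.
have f404 : T i4 i0 i4 = (- t%:Z) by rewrite (s12 i4 i0 i4) e044.
have f420 : T i4 i2 i0 = 1 by rewrite (s12 i4 i2 i0) (s23 i2 i4 i0) (s12 i2 i0 i4) e024.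
have f422 : T i4 i2 i2 = (- r%:Z) by rewrite (s12 i4 i2 i2) (s23 i2 i4 i2) e224.
have f424 : T i4 i2 i4 = (- (sg * s%:Z)) by rewrite (s12 i4 i2 i4) e244.
have f440 : T i4 i4 i0 = (- t%:Z) by rewrite (s23 i4 i4 i0) (s12 i4 i0 i4) e044.
have f442 : T i4 i4 i2 = (- (sg * s%:Z)) by rewrite (s23 i4 i4 i2) (s12 i4 i2 i4) e244.
have f444 : T i4 i4 i4 = (2 * sg * s%:Z * t%:Z + r%:Z * t%:Z ^+ 2) by rewrite  e444.
rewrite f000 f002 f004 f020 f022 f024 f040 f042 f044 f200 f202 f204 f220 f222 f224 f240 f242 f244 f400 f402 f404 f420 f422 f424 f440 f442 f444.
rewrite /Fm; ring.
Qed.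

Lemma cx_sub a b : cx (subD a b) = cx a - cx b. Proof. rewrite /cx /subD; ring. Qed.
Lemma cy_sub a b : cy (subD a b) = cy a - cy b. Proof. rewrite /cy /subD; ring. Qed.
Lemma cz_sub a b : cz (subD a b) = cz a - cz b. Proof. rewrite /cz /subD; ring. Qed.

Definition PP (r s t a b c : int) := if k is Y0 then P0 r s t a b c else P1 r s t (a - s * c) b c.

Lemma c3E L : c3J1 T L =
  PP r%:Z s%:Z t%:Z (cx L - r%:Z * (cy L - t%:Z * cz L) - (t%:Z * r%:Z + sg * s%:Z) * cz L)
     (cy L - t%:Z * cz L) (cz L).
Proof.
rewrite /c3J1 !sum6c /= ?sum6 /= !interE !cx_sub !cy_sub !cz_sub.
set X := cx L; set Y := cy L; set Z := cz L.
rewrite /cx /cy /cz /D /= /Fm /PP /P0 /P1 /sg.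
clearbody X Y Z; case: k => /=; match goal with |- ?a = ?b => change (@eq int a b) end; ring.
Qed.

Definition ca (a : divisor) : int := cx a - r%:Z * (cy a - t%:Z * cz a) - (t%:Z * r%:Z + sg * s%:Z) * cz a.
Definition cb (a : divisor) : int := cy a - t%:Z * cz a.
Definition cc (a : divisor) : int := cz a.

Lemma linEq_coords a b : linEq k r s t a b -> cx a = cx b /\ cy a = cy b /\ cz a = cz b.
Proof.
case=> m Hm.
have h0 := Hm i0; have h1 := Hm i1; have h2 := Hm i2; have h3 := Hm i3; have h4 := Hm i4; have h5 := Hm i5.
rewrite sum3 /rayc /= in h0; rewrite sum3 /rayc /= in h1; rewrite sum3 /rayc /= in h2.
rewrite sum3 /rayc /= in h3; rewrite sum3 /rayc /= in h4; rewrite sum3 /rayc /= in h5.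
split; [|split]; apply/eqP; rewrite -subr_eq0; apply/eqP.
- have E : cx a - cx b = (a i0 - b i0) + (a i1 - b i1) + r%:Z * (a i3 - b i3) + (t%:Z * r%:Z + sg * s%:Z) * (a i5 - b i5) by rewrite /cx; ring.
  rewrite E.
  rewrite h0 h1 h3 h5 /sg; case: k => /=; ring.
- have E : cy a - cy b = (a i2 - b i2) + (a i3 - b i3) + t%:Z * (a i5 - b i5) by rewrite /cy; ring.
  rewrite E.
  rewrite h2 h3 h5; ring.
- have E : cz a - cz b = (a i4 - b i4) + (a i5 - b i5) by rewrite /cz; ring.
  rewrite E.
  rewrite h4 h5; ring.
Qed.

Lemma coords_linEq a b : cx a = cx b -> cy a = cy b -> cz a = cz b -> linEq k r s t a b.
Proof.
move=> hx hy hz.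
exists (fun n : 'I_3 => match val n with 0%N => - (a i1 - b i1) - r%:Z * (a i3 - b i3) - t%:Z * r%:Z * (a i5 - b i5)
   | 1%N => - (a i3 - b i3) - t%:Z * (a i5 - b i5) | _ => - (a i5 - b i5) end).
apply: ord6_ind; rewrite sum3 /rayc /=.
- apply/eqP; rewrite -subr_eq0; apply/eqP.
  transitivity (cx a - cx b); first by rewrite /cx /sg; case: k => /=; ring.
  by rewrite hx subrr.
- ring.
- apply/eqP; rewrite -subr_eq0; apply/eqP.
  transitivity (cy a - cy b); first by rewrite /cy; ring.
  by rewrite hy subrr.
- ring.
- apply/eqP; rewrite -subr_eq0; apply/eqP.
  transitivity (cz a - cz b); first by rewrite /cz; ring.
  by rewrite hz subrr.
- ring.
Qed.

Lemma linEqE a b : linEq k r s t a b = (ca a = ca b /\ cb a = cb b /\ cc a = cc b).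
Proof.
apply: PropExtensionality.propositional_extensionality; split.
- by case/linEq_coords => hx [hy hz]; rewrite /ca /cb /cc hx hy hz.
- rewrite /ca /cb /cc => -[h1 [h2 h3]].
  have hz : cz a = cz b by [].
  have hy : cy a = cy b by move: h2; rewrite hz => /eqP; rewrite (can_eq (subrK _)) => /eqP.
  apply: coords_linEq => //.
  by move: h1; rewrite hy hz => /eqP; rewrite (can_eq (subrK _)) (can_eq (subrK _)) => /eqP.
Qed.

Lemma caD0 : ca (D 0) = 1. Proof. rewrite /ca /cx /cy /cz /D /=; ring. Qed.
Lemma cbD0 : cb (D 0) = 0. Proof. rewrite /cb /cx /cy /cz /D /=; ring. Qed.
Lemma ccD0 : cc (D 0) = 0. Proof. rewrite /cc /cx /cy /cz /D /=; ring. Qed.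
Lemma caD3 : ca (D 3) = 0. Proof. rewrite /ca /cx /cy /cz /D /=; ring. Qed.
Lemma cbD3 : cb (D 3) = 1. Proof. rewrite /cb /cx /cy /cz /D /=; ring. Qed.
Lemma ccD3 : cc (D 3) = 0. Proof. rewrite /cc /cx /cy /cz /D /=; ring. Qed.
Lemma caD5 : ca (D 5) = 0. Proof. rewrite /ca /cx /cy /cz /D /=; ring. Qed.
Lemma cbD5 : cb (D 5) = 0. Proof. rewrite /cb /cx /cy /cz /D /=; ring. Qed.
Lemma ccD5 : cc (D 5) = 1. Proof. rewrite /cc /cx /cy /cz /D /=; ring. Qed.
Lemma caD05 : ca (addD (D 0) (D 5)) = 1. Proof. rewrite /ca /cx /cy /cz /D /addD /=; ring. Qed.
Lemma cbD05 : cb (addD (D 0) (D 5)) = 0. Proof. rewrite /cb /cx /cy /cz /D /addD /=; ring. Qed.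
Lemma ccD05 : cc (addD (D 0) (D 5)) = 1. Proof. rewrite /cc /cx /cy /cz /D /addD /=; ring. Qed.
Lemma caD35 : ca (addD (D 3) (D 5)) = 0. Proof. rewrite /ca /cx /cy /cz /D /addD /=; ring. Qed.
Lemma cbD35 : cb (addD (D 3) (D 5)) = 1. Proof. rewrite /cb /cx /cy /cz /D /addD /=; ring. Qed.
Lemma ccD35 : cc (addD (D 3) (D 5)) = 1. Proof. rewrite /cc /cx /cy /cz /D /addD /=; ring. Qed.

Lemma c3E' L : c3J1 T L = PP r%:Z s%:Z t%:Z (ca L) (cb L) (cc L).
Proof. exact: c3E. Qed.

Lemma nef_abc L : nef T L ->
  0 <= ca L /\ 0 <= cb L /\ 0 <= cc L /\ (k = Y1 -> 0 <= ca L - s%:Z * cc L).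
Proof.
move=> HN.
have n24 := HN i2 i4 isT cone24; rewrite interE in n24.
have n04 := HN i0 i4 isT cone04; rewrite interE in n04.
have n02 := HN i0 i2 isT cone02; rewrite interE in n02.
have n25 := HN i2 i5 isT cone25; rewrite interE in n25.
split; [|split; [|split]].
- apply: le_trans n24 _; rewrite le_eqVlt; apply/orP; left; apply/eqP.
  rewrite /ca /Fm /cx /cy /cz /D /sg /=; case: k => /=; ring.
- apply: le_trans n04 _; rewrite le_eqVlt; apply/orP; left; apply/eqP.
  rewrite /cb /Fm /cx /cy /cz /D /sg /=; case: k => /=; ring.
- apply: le_trans n02 _; rewrite le_eqVlt; apply/orP; left; apply/eqP.
  rewrite /cc /Fm /cx /cy /cz /D /sg /=; case: k => /=; ring.
- move=> hk; apply: le_trans n25 _; rewrite le_eqVlt; apply/orP; left; apply/eqP.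
  rewrite /ca /cc /Fm /cx /cy /cz /D /sg /= hk /=; ring.
Qed.
End S.

Lemma Y00 : (Y0 = Y0) = True.
Proof. by apply: PropExtensionality.propositional_extensionality. Qed.
Lemma Y01 : (Y0 = Y1) = False.
Proof. by apply: PropExtensionality.propositional_extensionality. Qed.
Lemma Y10 : (Y1 = Y0) = False.
Proof. by apply: PropExtensionality.propositional_extensionality. Qed.
Lemma Y11 : (Y1 = Y1) = True.
Proof. by apply: PropExtensionality.propositional_extensionality. Qed.

Ltac destr := repeat match goal with
  | H : _ \/ _ |- _ => destruct H as [H|H]
  | H : _ /\ _ |- _ => destruct H
  | H : False |- _ => destruct H
  | H : True |- _ => clear H
  end.

Theorem proposition3p7 (k : kind) (r s t : nat) (L : divisor)
    (T : 'I_6 -> 'I_6 -> 'I_6 -> int) :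
  (k = Y1 -> (0 < s)%N /\ (0 < t)%N) ->
  IsIntersectionForm k r s t T ->
  nef T L ->
  (c3J1 T L = 0 <->
      linEq k r s t L (D 0) \/
       (r = 0%N /\ linEq k r s t L (D 3)) \/
       (s = 0%N /\ t = 0%N) /\ linEq k r s t L (D 5) \/
       (* (a) *) (k = Y0 /\ t = 1%N) /\ linEq k r s t L (addD (D 0) (D 5)) \/
       (* (b) *) (k = Y1 /\ s = 1%N /\ t = 1%N) /\ linEq k r s t L (addD (D 0) (D 5)) \/
       (* (c) *) (r = 0%N /\ k = Y0 /\ s = 1%N) /\ linEq k r s t L (addD (D 3) (D 5)) \/
       (* (d) *) (r = 0%N /\ k = Y0 /\ s = 2%N /\ t = 2%N) /\ linEq k r s t L (D 5) \/
       (* (e) *) (r = 1%N /\ k = Y0 /\ s = 0%N /\ t = 0%N) /\ linEq k r s t L (addD (D 3) (D 5)) \/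
       (* (f) *) (r = 1%N /\ k = Y0 /\ s = 1%N /\ t = 2%N) /\ linEq k r s t L (D 5) \/
       (* (g) *) (r = 1%N /\ k = Y0 /\ s = 0%N /\ t = 3%N) /\ linEq k r s t L (D 5) \/
       (* (h) *) (r = 2%N /\ k = Y0 /\ s = 0%N /\ t = 2%N) /\ linEq k r s t L (D 5)).
Proof.
move=> hY1 HT HN.
have [ha [hb [hc hk]]] := nef_abc HT HN.
rewrite (c3E' HT) !linEqE !caD0 !cbD0 !ccD0 !caD3 !cbD3 !ccD3 !caD5 !cbD5 !ccD5
  !caD05 !cbD05 !ccD05 !caD35 !cbD35 !ccD35.
move: ha hb hc hk; set al := ca k r s t L; set be := cb t L; set ga := cc L.
clearbody al be ga => ha hb hc hk.
case: k hY1 hk {HT HN} => hY1 hk; rewrite /PP ?Y00 ?Y01 ?Y10 ?Y11.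
- split.
  + move/core0; move=> /(_ (le0z_nat _) (le0z_nat _) (le0z_nat _) ha hb hc); rewrite /Disj0.
    move=> H; destr.
    * left; repeat split; lia.
    * do 1! right; left; repeat split; lia.
    * do 2! right; left; repeat split; lia.
    * do 3! right; left; repeat split; lia.
    * do 5! right; left; repeat split; lia.
    * do 6! right; left; repeat split; lia.
    * do 7! right; left; repeat split; lia.
    * do 8! right; left; repeat split; lia.
    * do 9! right; left; repeat split; lia.
    * do 10! right; repeat split; lia.
  + move=> H; destr; subst; rewrite /P0; ring.
- have [hs ht] := hY1 erefl.
  have ha' := hk erefl.
  split.
  + move=> H.
    have := @core1 r%:Z (s%:Z - 1) (t%:Z - 1) (al - s%:Z * ga) be ga (le0z_nat _) ltac:(lia) ltac:(lia) ha' hb hc.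
    rewrite /P1s !subrK => /(_ H); rewrite /Disj1 => H1; destr; subst;
    repeat match goal with H : context [?x * 0] |- _ => rewrite mulr0 in H
                         | H : context [?x * 1] |- _ => rewrite mulr1 in H end.
    * left; repeat split; lia.
    * right; left; repeat split; lia.
    * do 4! right; left; repeat split; lia.
  + move=> H; destr; subst; rewrite /P1; try ring; lia.
Qed.
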